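(* Let $p$ be a prime and $n\ge 1$. A $C_{p^n}$-transfer system $T$ is lesser simply paired if and only if either $T$ is connected, or $T$ has exactly two connected components and the connected component of the trivial subgroup consists of the trivial subgroup alone. Consequently the number of lesser simply paired $C_{p^n}$-transfer systems is $\mathrm{Cat}(n)+\mathrm{Cat}(n-1)=\frac{(5n-1)(2n-2)!}{(n-1)!(n+1)!}$, where $\mathrm{Cat}(m)=\frac{(2m)!}{(m+1)!m!}$, and their proportion among all $C_{p^n}$-transfer systems is $\frac{5n^2+9n-2}{16n^2-4}$.
   Context: The subgroups of $C_{p^n}$ are $C_{p^i}$, $0\le i\le n$, totally ordered by inclusion. A $C_{p^n}$-transfer system is a partial order $\to$ on these subgroups refining inclusion ($K\to H$ implies $K\le H$), reflexive, transitive, and closed under restriction ($K\to H$ implies $K\cap L\to H\cap L$ for all $L$). The total number of $C_{p^n}$-transfer systems is $\mathrm{Cat}(n+1)$. Connected components are those of the underlying undirected graph. A transfer system is saturated if whenever $L\le K\le H$ and $L\to H$ is in it then $K\to H$ is in it; $\mathrm{Hull}(T)$ is the smallest saturated transfer system containing $T$; $T_c$ is the complete transfer system. A pair $(T,T')$ is compatible if $T\subseteq T'$ and for all subgroups $A,B,C$ with $B,C\le A$: if $B\to A$ is in $T$ and $B\cap C\to B$ is in $T'$ then $C\to A$ is in $T'$. $T$ is lesser simply paired if for every transfer system $T'\supseteq T$, $(T,T')$ is compatible iff $T'\in\{\mathrm{Hull}(T),T_c\}$. *)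

(* Defs.v *)
(* The subgroup C_{p^i} of C_{p^n} is represented by the
   index i : 'I_n.+1; inclusion is <= on indices, intersection is min. *)
From mathcomp Require Import all_boot all_order all_algebra.
Set Implicit Arguments. Unset Strict Implicit. Unset Printing Implicit Defensive.

Section TS.
Variable n : nat.
Local Notation Sub := ('I_n.+1).
Local Notation Rel := {set Sub * Sub}.

Definition capS (K L : Sub) : Sub := if K <= L then K else L.

(* (K, H) \in T  means  K -> H *)
Definition is_transfer (T : Rel) : bool :=
  [&& [forall K : Sub, forall H : Sub, ((K, H) \in T) ==> (K <= H)],
      [forall K : Sub, (K, K) \in T],
      [forall K : Sub, forall H : Sub, forall L : Sub,
         ((K, H) \in T) && ((H, L) \in T) ==> ((K, L) \in T)] &
      [forall K : Sub, forall H : Sub, forall L : Sub,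
         ((K, H) \in T) ==> ((capS K L, capS H L) \in T)]].

Definition saturated (T : Rel) : bool :=
  [forall L : Sub, forall K : Sub, forall H : Sub,
     [&& L <= K, K <= H & (L, H) \in T] ==> ((K, H) \in T)].

Definition Tc : Rel := [set x : Sub * Sub | x.1 <= x.2].

Definition is_hull (T S : Rel) : bool :=
  [&& is_transfer S, saturated S, T \subset S &
      [forall S' : Rel, [&& is_transfer S', saturated S' & T \subset S']
                          ==> (S \subset S')]].

Definition compatible (T T' : Rel) : bool :=
  (T \subset T') &&
  [forall A : Sub, forall B : Sub, forall C : Sub,
     [&& B <= A, C <= A, (B, A) \in T & (capS B C, B) \in T'] ==> ((C, A) \in T')].

Definition lesser_simply_paired (T : Rel) : bool :=
  [forall T' : Rel, (is_transfer T' && (T \subset T')) ==>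
     (compatible T T' == (is_hull T T' || (T' == Tc)))].

Definition und_edge (T : Rel) : rel Sub := fun a b => ((a, b) \in T) || ((b, a) \in T).
Definition component (T : Rel) (x : Sub) : {set Sub} := [set y | connect (und_edge T) x y].
Definition num_components (T : Rel) : nat := #|[set component T x | x : Sub]|.

Definition trivial_sub : Sub := ord0.

End TS.

Definition Cat (m : nat) : nat := (m.*2)`! %/ ((m.+1)`! * m`!).

(* Main.v *)
Require Import Defs.
From mathcomp Require Import all_boot all_order all_algebra.
From mathcomp Require Import zify ring.
Set Implicit Arguments. Unset Strict Implicit. Unset Printing Implicit Defensive.


Definition be (s : seq nat) (u : nat) : bool := all (fun y => nth 0 s y <= u) (iota 0 u.+1).
Definition allowed (s : seq nat) : seq nat := 0 :: [seq u.+1 | u <- [seq u <- iota 0 (size s) | be s u]].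
Fixpoint gen (N : nat) : seq (seq nat) :=
  if N is N'.+1 then [seq v :: map succn s | s <- gen N', v <- allowed s] else [:: [::]].
Definition comps (s : seq nat) := count (be s) (iota 0 (size s)).
Definition valid (N : nat) (s : seq nat) : Prop :=
  [/\ size s = N, (forall i, i < N -> i <= nth 0 s i < N) &
      (forall i j, i < N -> i <= j -> j <= nth 0 s i -> nth 0 s j <= nth 0 s i)].

Lemma genS N : gen N.+1 = [seq v :: map succn s | s <- gen N, v <- allowed s].
Proof. by []. Qed.

Lemma mem_genS N x v : x \in gen N -> v \in allowed x -> v :: map succn x \in gen N.+1.
Proof. by move=> Hx Hv; rewrite genS; apply/allpairsPdep; exists x, v. Qed.

Lemma beP s u : reflect (forall y, y <= u -> nth 0 s y <= u) (be s u).
Proof.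
apply: (iffP allP) => H y.
  by move=> Hy; apply: H; rewrite mem_iota /=; lia.
by rewrite mem_iota => /andP[_ Hy]; apply: H; lia.
Qed.

Lemma gen_size N s : s \in gen N -> size s = N.
Proof.
elim: N s => [|N IH] s; first by rewrite inE => /eqP ->.
rewrite genS; by case/allpairsPdep => x [y [Hx _ ->]] /=; rewrite size_map IH.
Qed.

Lemma gen_valid N s : s \in gen N <-> valid N s.
Proof.
elim: N s => [|N IH] s.
  rewrite /= inE; split; first by move/eqP->; split.
  by case=> /size0nil ->.
rewrite genS; split.
  case/allpairsPdep => x [v [Hx Hv ->]].
  have [Sx Hr Hn] := (IH x).1 Hx.
  have Hv' : v = 0 \/ exists2 w, w < N & (be x w /\ v = w.+1).
    move: Hv; rewrite /allowed inE => /orP[/eqP->|]; first by left.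
    case/mapP => w; rewrite mem_filter mem_iota Sx => /andP[bw /andP[_ wN]] ->.
    by right; exists w.
  split; first by rewrite /= size_map Sx.
  - case=> [|i] /= Hi; first by case: Hv' => [->|[w wN [_ ->]]] //.
    rewrite (nth_map 0) ?Sx; last lia.
    by have := Hr i; lia.
  - case=> [|i] [|j] /= Hi Hij Hj //; try lia.
    + case: Hv' Hj => [->|[w wN [bw ->]]] // Hj.
      rewrite (nth_map 0) ?Sx; last lia.
      by have := (elimT (beP _ _) bw) j; lia.
    + rewrite (nth_map 0) ?Sx in Hj; last lia.
      have := Hr i; rewrite ltnS in Hi => /(_ Hi) Hri.
      rewrite !(nth_map 0) ?Sx; try lia.
      have := Hn i j; lia.
case=> Sx Hr Hn.
case: s Sx Hr Hn => [//|v s'] /= [Sx] Hr Hn.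
set x := map predn s'.
have Es : s' = map succn x.
  apply/(@eq_from_nth _ 0); rewrite /x ?size_map // => k Hk.
  rewrite (nth_map 0) ?size_map // (nth_map 0) //.
  move: Hk; rewrite Sx => Hk; have := Hr k.+1; rewrite /=; lia.
have Sx' : size x = N by rewrite size_map.
have nx k : k < N -> nth 0 s' k = (nth 0 x k).+1 by move=> Hk; rewrite Es (nth_map 0) // Sx'.
have Vx : valid N x.
  split => //.
  - move=> i Hi; have := Hr i.+1 Hi; rewrite /= nx //; lia.
  - move=> i j Hi Hij Hj; have Hj' : j < N.
      have := Hr i.+1 Hi; rewrite /= nx //; lia.
    have := Hn i.+1 j.+1 Hi Hij; rewrite /= !nx //; lia.
rewrite Es; apply: mem_genS; first by apply/IH.
  case: v Hr Hn => [|w] Hr Hn; first by rewrite inE.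
  rewrite inE /=; apply/mapP; exists w => //.
  have := Hr 0 (ltn0Sn _); rewrite /= => Hw.
  rewrite mem_filter mem_iota Sx' /=; apply/andP; split; last lia.
  apply/beP => y Hy; have := Hn 0 y.+1 (ltn0Sn _) (leq0n _); rewrite /= nx; last lia.
  move=> H; have := H Hy; lia.
Qed.

Lemma allowed_uniq s : uniq (allowed s).
Proof.
rewrite /allowed /= map_inj_uniq ?filter_uniq ?iota_uniq ?andbT //; last by move=> ? ? [].
by apply/mapP => -[].
Qed.

Lemma gen_uniq N : uniq (gen N).
Proof.
elim: N => [|N IH] //.
rewrite genS; apply: allpairs_uniq_dep => //; first by move=> *; apply: allowed_uniq.
move=> [s1 v1] [s2 v2] _ _ /= [-> E].
by move/(inj_map succn_inj): E => ->.
Qed.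

Lemma be_cons0 v s : be (v :: map succn s) 0 = (v == 0).
Proof. by rewrite /be /= andbT leqn0. Qed.

Lemma be_consS v s u : u < size s -> be (v :: map succn s) u.+1 = (v <= u.+1) && be s u.
Proof.
move=> Hu; apply/beP/andP.
  move=> H; split; first by have := H 0; apply.
  apply/beP => y Hy; have := H y.+1; rewrite /= (nth_map 0); last lia.
  by move=> /(_ Hy).
case=> Hv /beP H [|y] //= Hy; rewrite (nth_map 0); last lia.
by have := H y Hy.
Qed.

Lemma comps_cons v s : comps (v :: map succn s) =
   (v == 0) + count (fun u => (v <= u.+1) && be s u) (iota 0 (size s)).
Proof.
rewrite /comps /= size_map be_cons0; congr (_ + _).
rewrite -(addn0 1) iotaDl count_map; apply: eq_in_count => u.
by rewrite mem_iota /= => Hu; rewrite add1n be_consS.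
Qed.

Lemma count_rank (B : seq nat) c : sorted ltn B ->
  count (fun w => count (fun u => w <= u) B == c) B = (0 < c) && (c <= size B).
Proof.
elim: B => [|b B IH] /=; first by case: c.
move=> Hp; have Hs := path_sorted Hp.
have Ha : all (ltn b) B by apply: order_path_min Hp; apply: ltn_trans.
rewrite leqnn add1n.
have -> : count (fun u => b <= u) B = size B.
  rewrite -count_predT; apply: eq_in_count => u Hu /=.
  by have := allP Ha u Hu => /= /ltnW ->.
rewrite (@eq_in_count _ _ (fun w => count (fun u => w <= u) B == c)); last first.
  move=> w Hw /=; have := allP Ha w Hw => /= Hbw.
  by rewrite leqNgt Hbw.
rewrite IH //.
case: (ltngtP c (size B).+1) => Hc.
- by rewrite ltnS in Hc; rewrite add0n Hc andbT.
- by rewrite add0n (leqNgt c) (ltnW Hc) !andbF.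
- by rewrite Hc ltnn andbF.
Qed.

Lemma count_allowed s c :
  count (fun t => comps t == c) [seq v :: map succn s | v <- allowed s] =
  (0 < c) && (c <= comps s + 1).
Proof.
rewrite /allowed /= !count_map.
rewrite comps_cons eqxx add1n.
set B := [seq u <- iota 0 (size s) | be s u].
have -> : count (fun u => (0 <= u.+1) && be s u) (iota 0 (size s)) = comps s by [].
rewrite (@eq_in_count _ _ (fun w => count (fun u => w <= u) B == c)); last first.
  move=> w; rewrite mem_filter => /andP[_ _] /=.
  by rewrite comps_cons /= add0n /B count_filter.
rewrite count_rank; last by apply: sorted_filter; [apply: ltn_trans | apply: iota_ltn_sorted].
have -> : size B = comps s by rewrite /B size_filter.
rewrite addn1; case: (ltngtP c (comps s).+1) => Hc.
- by rewrite ltnS in Hc; rewrite add0n Hc andbT.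
- by rewrite add0n (leqNgt c) (ltnW Hc) !andbF.
- by rewrite Hc ltnn andbF.
Qed.

Definition A N c := count (fun s => comps s == c) (gen N).

Lemma sumn_count (T : Type) (b : pred T) (l : seq T) : sumn [seq (b x : nat) | x <- l] = count b l.
Proof. by elim: l => //= x l ->. Qed.

Lemma A_succ N c : A N.+1 c = count (fun s => (0 < c) && (c <= comps s + 1)) (gen N).
Proof.
rewrite /A genS count_flatten -map_comp -sumn_count; congr sumn.
by apply: eq_map => s; exact: count_allowed.
Qed.

Lemma comps_le s : comps s <= size s.
Proof. by rewrite /comps; apply: leq_trans (count_size _ _) _; rewrite size_iota. Qed.

Lemma A_gt N c : N < c -> A N c = 0.
Proof.
move=> Hc; rewrite /A; apply/eqP; rewrite -leqn0 leqNgt -has_count; apply/hasP => -[s Hs /eqP Ec].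
by have := comps_le s; rewrite Ec (gen_size Hs); rewrite leqNgt Hc.
Qed.

Lemma A00 : A 0 0 = 1. Proof. by []. Qed.

Lemma count_split (T : Type) (a b d : pred T) l :
  (forall x, a x = b x || d x) -> (forall x, ~~ (b x && d x)) -> count a l = count b l + count d l.
Proof.
move=> H1 H2; elim: l => //= x l ->; rewrite H1; have := H2 x.
by case: (b x); case: (d x) => //= _; rewrite addnCA.
Qed.

Lemma A_rec N c : 0 < c -> A N.+1 c = A N c.-1 + A N.+1 c.+1.
Proof.
move=> Hc; rewrite !A_succ /A /=.
apply: count_split => s.
  by case: c Hc => //= c _; apply/idP/idP; lia.
by case: c Hc => //= c _; apply/negP; lia.
Qed.

Lemma size_gen_A N : size (gen N) = A N.+1 1.
Proof. by rewrite A_succ -count_predT; apply: eq_count => s /=; rewrite addn1. Qed.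

Lemma A_S0 N : A N.+1 0 = 0.
Proof. by rewrite A_succ; apply/eqP; rewrite -leqn0 leqNgt -has_count; apply/hasP => -[]. Qed.

Definition bm m b := if b is b'.+1 then 'C(m, b') else 0.

Lemma bmS m b : bm m.+1 b.+1 = bm m b.+1 + bm m b.
Proof. by case: b => [|b] /=; rewrite ?bin0 ?addn0 // binS addnC. Qed.

Lemma A_closed a b : b <= a -> A a.+1 (a.+1 - b) + bm (a + b) b = 'C(a + b, b).
Proof.
elim: a b => [|a IHa] b Hb.
  have -> : b = 0 by lia.
  by rewrite /= (A_rec 0 (ltn0Sn 0)) /= A00 (@A_gt 1 2).
elim: b Hb => [|b IHb] Hb.
  rewrite subn0 addn0 /= bin0 A_rec //= (@A_gt a.+2 a.+3) // !addn0.
  by have := IHa 0 (leq0n _); rewrite subn0 addn0 /= bin0 addn0.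
have E1 : a.+2 - b.+1 = (a.+1 - b).+1 - 1 by lia.
have Hc : 0 < a.+2 - b.+1 by lia.
rewrite (A_rec _ Hc).
have E2 : (a.+2 - b.+1).+1 = a.+2 - b by lia.
rewrite E2.
have IB := IHb (ltnW Hb).
have e3 : a.+1 + b.+1 = (a.+1 + b).+1 by lia.
rewrite e3 bmS binS.
have [Hlt|Heq] : b < a \/ b = a by lia.
  have IA := IHa b.+1 Hlt.
  have e4 : (a.+2 - b.+1).-1 = a.+1 - b.+1 by lia.
  have e5 : a + b.+1 = a.+1 + b by lia.
  rewrite e4; rewrite e5 in IA.
  lia.
subst b.
have e4 : (a.+2 - a.+1).-1 = 0 by lia.
rewrite e4 A_S0.
have : 'C((a.+1 + a), a.+1) = 'C(a.+1 + a, a).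
  have Hle : a <= a.+1 + a by lia.
  rewrite -[RHS](bin_sub Hle); congr binomial; lia.
rewrite /bm in IB *.
move=> HH; clear -IB HH; case: a IB HH => [|a] /=; lia.
Qed.

Lemma size_gen_bin a : size (gen a) * a.+1 = 'C(a.*2, a).
Proof.
rewrite size_gen_A; have := A_closed (leqnn a); rewrite subSnn addnn.
case: a => [|a] /=; first by rewrite addn0 muln1.
have := mul_bin_left (a.+1).*2 a.
have -> : (a.+1).*2 - a = a.+2 by lia.
set x := 'C(_, a.+1); set y := 'C(_, a); set z := A _ _.
nia.
Qed.

Lemma size_gen_fact a : size (gen a) * ((a.+1)`! * a`!) = (a.*2)`!.
Proof.
have H : a <= a.*2 by lia.
rewrite -(bin_fact H) -size_gen_bin.
have -> : a.*2 - a = a by lia.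
by rewrite factS; ring.
Qed.

Lemma size_gen_Cat a : size (gen a) = Cat a.
Proof.
by rewrite /Cat -size_gen_fact mulnK // muln_gt0 !fact_gt0.
Qed.



Lemma capS_l n (K L : 'I_n.+1) : K <= L -> capS K L = K.
Proof. by rewrite /capS => ->. Qed.
Lemma capS_r n (K L : 'I_n.+1) : L <= K -> capS K L = L.
Proof. move=> H; rewrite /capS; case: (leqP K L) => // H1; apply: ord_inj; lia. Qed.

Lemma xtrP n (T : {set 'I_n.+1 * 'I_n.+1}) : is_transfer T <->
  [/\ forall K H, (K, H) \in T -> K <= H,
      forall K, (K, K) \in T,
      forall K H L : 'I_n.+1, (K, H) \in T -> (H, L) \in T -> (K, L) \in T &
      forall K H L : 'I_n.+1, (K, H) \in T -> K <= L -> L <= H -> (K, L) \in T].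
Proof.
split.
  case/and4P => /forallP H1 /forallP H2 /forallP H3 /forallP H4; split.
  - by move=> K H; move: (H1 K) => /forallP /(_ H) /implyP; apply.
  - by move=> K; apply: H2.
  - by move=> K H L a b; move: (H3 K) => /forallP /(_ H) /forallP /(_ L) /implyP; apply; rewrite a b.
  - move=> K H L a b c; move: (H4 K) => /forallP /(_ H) /forallP /(_ L) /implyP /(_ a).
    by rewrite capS_l // capS_r.
case=> H1 H2 H3 H4; apply/and4P; split.
- by apply/forallP => K; apply/forallP => H; apply/implyP; apply: H1.
- by apply/forallP.
- apply/forallP => K; apply/forallP => H; apply/forallP => L; apply/implyP => /andP[a b].
  exact: H3 a b.
- apply/forallP => K; apply/forallP => H; apply/forallP => L; apply/implyP => a.
  have KH := H1 _ _ a.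
  case: (leqP K L) => KL.
    rewrite capS_l //; case: (leqP H L) => HL; first by rewrite capS_l.
    by rewrite capS_r ?(ltnW HL) //; apply: H4 a KL (ltnW HL).
  rewrite capS_r ?(ltnW KL) // capS_r; [apply: H2 | apply: leq_trans (ltnW KL) KH].
Qed.

Lemma xsatP n (T : {set 'I_n.+1 * 'I_n.+1}) : saturated T <->
  (forall L K H : 'I_n.+1, L <= K -> K <= H -> (L, H) \in T -> (K, H) \in T).
Proof.
split.
  move=> /forallP S L K H a b c; move: (S L) => /forallP /(_ K) /forallP /(_ H) /implyP; apply.
  by rewrite a b c.
move=> S; apply/forallP => L; apply/forallP => K; apply/forallP => H; apply/implyP.
by case/and3P; apply: S.
Qed.

Lemma xhullP n (T S : {set 'I_n.+1 * 'I_n.+1}) : is_hull T S <->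
  [/\ is_transfer S, saturated S, T \subset S &
      forall S', is_transfer S' -> saturated S' -> T \subset S' -> S \subset S'].
Proof.
split.
  case/and4P => a b c /forallP d; split => // S' x y z.
  by move: (d S') => /implyP; apply; rewrite x y z.
case=> a b c d; apply/and4P; split => //; apply/forallP => S'; apply/implyP.
by case/and3P; apply: d.
Qed.

Lemma xcompatP n (T T' : {set 'I_n.+1 * 'I_n.+1}) : compatible T T' <->
  (T \subset T' /\ forall A B C : 'I_n.+1, B <= A -> C <= A -> (B, A) \in T -> (capS B C, B) \in T' ->
      (C, A) \in T').
Proof.
split.
  case/andP => a /forallP b; split => // A B C w x y z.
  by move: (b A) => /forallP /(_ B) /forallP /(_ C) /implyP; apply; rewrite w x y z.
case=> a b; apply/andP; split => //; apply/forallP => A; apply/forallP => B; apply/forallP => C.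
by apply/implyP; case/and4P; apply: b.
Qed.

Lemma xlspP n (T : {set 'I_n.+1 * 'I_n.+1}) : lesser_simply_paired T <->
  (forall T', is_transfer T' -> T \subset T' -> (compatible T T' <-> (is_hull T T' \/ T' = Tc n))).
Proof.
split.
  move=> /forallP L T' a b; move: (L T') => /implyP; rewrite a b => /(_ isT) /eqP ->.
  by split; [case/orP => [->|/eqP ->]; auto | case => [->|->]; rewrite ?eqxx ?orbT].
move=> L; apply/forallP => T'; apply/implyP => /andP[a b]; apply/eqP.
have LL := L T' a b.
apply/idP/idP.
  by move/LL.1 => [->//|->]; rewrite eqxx orbT.
by case/orP => [H|/eqP H]; apply/LL.2; auto.
Qed.

Lemma Tc_transfer n : is_transfer (Tc n).
Proof.
apply/xtrP; split => [K H|K|K H L|K H L]; rewrite !inE //=; exact: leq_trans.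
Qed.

Lemma Tc_sat n : saturated (Tc n).
Proof. by apply/xsatP => L K H _ a _; rewrite inE. Qed.

Lemma compat_intro n (T T' : {set 'I_n.+1 * 'I_n.+1}) : is_transfer T' -> T \subset T' ->
  (forall A B C : 'I_n.+1, B <= C -> C <= A -> (B, A) \in T -> (C, A) \in T') -> compatible T T'.
Proof.
move=> /xtrP [t1 t2 t3 t4] sb H; apply/xcompatP; split => [//|A B C BA CA BAT].
case: (leqP B C) => BC; first by move=> _; exact: (H A B C BC CA BAT).
rewrite capS_r ?(ltnW BC) // => CB.
by apply: t3 CB _; apply: (subsetP sb).
Qed.

Lemma compat_elim n (T T' : {set 'I_n.+1 * 'I_n.+1}) : is_transfer T' -> compatible T T' ->
  forall A B C : 'I_n.+1, B <= C -> C <= A -> (B, A) \in T -> (C, A) \in T'.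
Proof.
move=> /xtrP [t1 t2 t3 t4] /xcompatP [sb H] A B C BC CA BAT.
apply: (H A B C) => //; first exact: leq_trans CA.
by rewrite capS_l.
Qed.

Lemma compat_sat n (T T' : {set 'I_n.+1 * 'I_n.+1}) : is_transfer T' -> saturated T' ->
  T \subset T' -> compatible T T'.
Proof.
move=> tr /xsatP S sb; apply: compat_intro => // A B C BC CA BAT.
by apply: S BC CA _; apply: (subsetP sb).
Qed.


Definition conn n (T : {set 'I_n.+1 * 'I_n.+1}) (x y : 'I_n.+1) := connect (und_edge T) x y.

Lemma und_sym n (T : {set 'I_n.+1 * 'I_n.+1}) : symmetric (und_edge T).
Proof. by move=> x y; rewrite /und_edge orbC. Qed.

Lemma conn_sym n (T : {set 'I_n.+1 * 'I_n.+1}) (x y : 'I_n.+1) : conn T x y = conn T y x.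
Proof. exact: (sym_connect_sym (@und_sym n T)). Qed.

Lemma conn_trans n (T : {set 'I_n.+1 * 'I_n.+1}) (x y z : 'I_n.+1) : conn T x y -> conn T y z -> conn T x z.
Proof. exact: connect_trans. Qed.

Lemma conn0 n (T : {set 'I_n.+1 * 'I_n.+1}) (x : 'I_n.+1) : conn T x x.
Proof. exact: connect0. Qed.

Lemma edge_conn n (T : {set 'I_n.+1 * 'I_n.+1}) (x y : 'I_n.+1) : (x, y) \in T -> conn T x y.
Proof. by move=> H; apply: connect1; rewrite /und_edge H. Qed.

Lemma und_conn n (T : {set 'I_n.+1 * 'I_n.+1}) (x y : 'I_n.+1) : und_edge T x y -> conn T x y.
Proof. by move=> H; apply: connect1. Qed.

Lemma conv n (T : {set 'I_n.+1 * 'I_n.+1}) (x y z : 'I_n.+1) : is_transfer T -> x <= z -> z <= y ->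
  conn T x y -> conn T x z.
Proof.
move=> /xtrP[t1 t2 t3 t4] xz zy cxy.
case: (boolP (conn T x z)) => // nxz; exfalso.
have xz' : x < z.
  rewrite ltn_neqAle xz andbT; apply: contra nxz => /eqP e.
  by rewrite (ord_inj e) conn0.
pose A := [pred v : 'I_n.+1 | (v < z) && ~~ conn T z v].
have key : forall u v, und_edge T u v -> u \in A -> v \in A.
  move=> u v e /andP[uz nzu]; apply/andP; split.
    rewrite ltnNge; apply/negP => zv; apply: (negP nzu).
    case/orP: e => e.
      by rewrite conn_sym; apply: edge_conn; apply: t4 e (ltnW uz) zv.
    by have := t1 _ _ e; lia.
  apply: contra nzu => czv; apply: conn_trans czv _.
  by apply: und_conn; rewrite und_sym.
have cl : closed (und_edge T) A.
  move=> u v e; apply/idP/idP; first exact: key.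
  by apply: key; rewrite und_sym.
have := closed_connect cl cxy.
rewrite !inE xz' /= conn_sym nxz /= => /esym /andP[yz _].
by move: yz; rewrite ltnNge zy.
Qed.

Lemma fromMin n (T : {set 'I_n.+1 * 'I_n.+1}) (x y : 'I_n.+1) : is_transfer T ->
  (forall v, conn T x v -> x <= v) -> conn T x y -> (x, y) \in T.
Proof.
move=> /xtrP[t1 t2 t3 t4] mn cxy.
pose A := [pred v : 'I_n.+1 | conn T x v && ((x, v) \in T)].
have key : forall u v, und_edge T u v -> u \in A -> v \in A.
  move=> u v e /andP[cxu xu].
  have cxv : conn T x v by apply: conn_trans cxu (und_conn e).
  apply/andP; split => //.
  have xv := mn v cxv.
  case: (leqP v u) => vu; first by apply: t4 xu xv vu.
  case/orP: e => e; first by apply: t3 xu e.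
  by have := t1 _ _ e; lia.
have cl : closed (und_edge T) A.
  move=> u v e; apply/idP/idP; first exact: key.
  by apply: key; rewrite und_sym.
have := closed_connect cl cxy.
by rewrite !inE conn0 t2 /= => /esym /andP[].
Qed.

Definition W n (T : {set 'I_n.+1 * 'I_n.+1}) :=
  [set p : 'I_n.+1 * 'I_n.+1 | (p.1 <= p.2) && conn T p.1 p.2].

Lemma W_transfer n (T : {set 'I_n.+1 * 'I_n.+1}) : is_transfer T -> is_transfer (W T).
Proof.
move=> tr; apply/xtrP; split => [K H|K|K H L|K H L]; rewrite !inE /=.
- by case/andP.
- by rewrite leqnn conn0.
- case/andP => a b /andP[c d]; rewrite (leq_trans a c) /=; exact: conn_trans b d.
- case/andP => a b c d; rewrite c /=; exact: conv tr c d b.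
Qed.

Lemma W_sat n (T : {set 'I_n.+1 * 'I_n.+1}) : is_transfer T -> saturated (W T).
Proof.
move=> tr; apply/xsatP => L K H a b; rewrite !inE /= => /andP[c d]; rewrite b /=.
have e := conv tr a b d.
by apply: conn_trans d; rewrite conn_sym.
Qed.

Lemma T_sub_W n (T : {set 'I_n.+1 * 'I_n.+1}) : is_transfer T -> T \subset W T.
Proof.
move=> /xtrP[t1 t2 t3 t4]; apply/subsetP => -[x y] H; rewrite inE /=.
by rewrite (t1 _ _ H) edge_conn.
Qed.

Definition oneI n : 'I_n.+1 := inord 1.

Lemma one_val n : 0 < n -> nat_of_ord (oneI n) = 1.
Proof. by move=> H; rewrite /oneI inordK. Qed.

Definition Pc n (T : {set 'I_n.+1 * 'I_n.+1}) :=
  conn T ord0 ord_max \/ ((forall y, conn T ord0 y -> y = ord0) /\ conn T (oneI n) ord_max).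

Lemma one_min n (T : {set 'I_n.+1 * 'I_n.+1}) : 0 < n -> (forall y, conn T ord0 y -> y = ord0) ->
  forall v, conn T (oneI n) v -> oneI n <= v.
Proof.
move=> n0 h0 v c; rewrite one_val //; case: (posnP v) => // v0.
have : v = ord0 by apply: ord_inj.
move=> e; move: c; rewrite e conn_sym => /h0 e1.
by have := one_val n0; rewrite e1.
Qed.

Lemma all_Tc n (T' : {set 'I_n.+1 * 'I_n.+1}) : is_transfer T' ->
  (forall x : 'I_n.+1, (x, ord_max) \in T') -> T' = Tc n.
Proof.
move=> /xtrP[t1 t2 t3 t4] H; apply/setP => -[x y]; rewrite inE /=.
apply/idP/idP; first exact: t1.
by move=> xy; apply: t4 (H x) xy (leq_ord y).
Qed.

Lemma lsp_of_P n (T : {set 'I_n.+1 * 'I_n.+1}) : 0 < n -> is_transfer T -> Pc T ->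
  lesser_simply_paired T.
Proof.
move=> n0 tr P; apply/xlspP => T' trT' sb; split; last first.
  case=> [H|H].
    by case/xhullP: H => a b c _; apply: compat_sat.
  by subst T'; apply: compat_sat => //; apply: Tc_sat.
move=> cp; have [t1 t2 t3 t4] := iffLR (xtrP T') trT'.
case: P => [c0n|[h0 c1n]].
  have e0 : (ord0, ord_max) \in T by apply: fromMin.
  right; apply: all_Tc => // x.
  by apply: (compat_elim trT' cp) e0 => //; apply: leq_ord.
have e1 : (oneI n, ord_max) \in T by apply: fromMin => //; apply: one_min.
have ge1 : forall x : 'I_n.+1, 0 < x -> (x, ord_max) \in T'.
  by move=> x x0; apply: (compat_elim trT' cp) e1; rewrite ?one_val ?leq_ord.
case: (boolP [exists y : 'I_n.+1, ((ord0, y) \in T') && (0 < y)]).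
  case/existsP => y /andP[y1 y0].
  have e01 : (ord0, oneI n) \in T' by apply: t4 y1 _ _; rewrite ?one_val.
  have e0 : (ord0, ord_max) \in T' by apply: t3 e01 (subsetP sb _ e1).
  right; apply: all_Tc => // x; case: (posnP x) => x0; last exact: ge1.
  by have -> : x = ord0 by apply: ord_inj.
move=> /existsPn nx.
have z0 : forall y : 'I_n.+1, (ord0, y) \in T' -> y = ord0.
  move=> y H; apply: ord_inj => /=; have := nx y; rewrite H /=; lia.
left; apply/xhullP; split => //.
  apply/xsatP => L K H LK KH LH.
  case: (posnP K) => K0.
    have eL : L = ord0 by apply: ord_inj => /=; lia.
    have eK : K = ord0 by apply: ord_inj.
    by rewrite eK; rewrite eL in LH; rewrite (z0 _ LH) t2.
  by apply: t4 (ge1 _ K0) KH (leq_ord H).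
move=> S' trS' satS' sbS'; apply/subsetP => -[x y] xy.
have [s1 s2 s3 s4] := iffLR (xtrP S') trS'.
case: (posnP x) => x0.
  have ex : x = ord0 by apply: ord_inj.
  by rewrite ex in xy *; rewrite (z0 _ xy).
have := (iffLR (xsatP S') satS') (oneI n) x ord_max.
rewrite one_val // => /(_ x0 (leq_ord x) (subsetP sbS' _ e1)) xm.
by apply: s4 xm (t1 _ _ xy) (leq_ord y).
Qed.

Lemma P_of_lsp n (T : {set 'I_n.+1 * 'I_n.+1}) : 0 < n -> is_transfer T ->
  lesser_simply_paired T -> Pc T.
Proof.
move=> n0 tr Lsp.
have [t1 t2 t3 t4] := iffLR (xtrP T) tr.
case: (boolP (conn T ord0 ord_max)) => [c|nc]; first by left.
right.
case: (@arg_minnP _ ord_max (fun k : 'I_n.+1 => ~~ conn T ord0 k) (fun k : 'I_n.+1 => nat_of_ord k) nc) => c ncc cmin.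
have c0 : forall j : 'I_n.+1, j < c -> conn T ord0 j.
  by move=> j jc; case: (boolP (conn T ord0 j)) => // nj; have := cmin j nj; lia.
pose T' := W T :|: [set p : 'I_n.+1 * 'I_n.+1 | (p.1 == ord0) && ((p.2 < c) || conn T c p.2)].
have inT' : forall x y : 'I_n.+1, ((x, y) \in T') =
   ((x <= y) && conn T x y) || ((x == ord0) && ((y < c) || conn T c y)).
  by move=> x y; rewrite !inE.
have trT' : is_transfer T'.
  apply/xtrP; split => [K H|K|K H L|K H L]; rewrite ?inT'.
  - by case/orP => /andP[// /eqP -> _].
  - by rewrite leqnn conn0.
  - case/orP => [/andP[KH cKH]|/andP[/eqP K0 hH]]; case/orP => [/andP[HL cHL]|/andP[/eqP H0 hL]].
    + by rewrite (leq_trans KH HL) (conn_trans cKH cHL).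
    + have K0 : K = ord0 by apply: ord_inj => /=; rewrite H0 /= in KH; lia.
      by rewrite K0 eqxx hL orbT.
    + rewrite K0 eqxx /=; apply/orP; right.
      case/orP: hH => [Hc|cH]; last by rewrite (conn_trans cH cHL) orbT.
      case: (ltnP L c) => // cL; exfalso.
      have c0L : conn T ord0 L by apply: conn_trans (c0 _ Hc) cHL.
      by have := @conv _ T ord0 L c tr (leq0n c) cL c0L; rewrite (negbTE ncc).
    + by rewrite K0 eqxx hL orbT.
  - case/orP => [/andP[KH cKH]|/andP[/eqP K0 hH]] KL LH.
      by rewrite KL (conv tr KL LH cKH).
    rewrite K0 eqxx /=; apply/orP; right.
    case: (ltnP L c) => // cL.
    case/orP: hH => [Hc|cH]; first by lia.
    by rewrite (conv tr cL LH cH) orbT.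
have sbW : W T \subset T' by apply/subsetP => p pW; rewrite inE pW.
have sb : T \subset T' by apply: subset_trans (T_sub_W tr) sbW.
have cp : compatible T T'.
  apply: compat_intro => // A B C BC CA BA.
  apply: (subsetP sbW); rewrite inE /= CA /=.
  have cBA := edge_conn BA.
  have cBC := conv tr BC CA cBA.
  by apply: conn_trans cBA; rewrite conn_sym.
have [H|H] := ((iffLR (xlspP T)) Lsp T' trT' sb).1 cp.
  exfalso; case/xhullP: H => _ _ _ /(_ (W T) (W_transfer tr) (W_sat tr) (T_sub_W tr)) sub.
  have : (ord0, c) \in T' by rewrite inT' eqxx conn0 !orbT.
  by move/(subsetP sub); rewrite inE /= (negbTE ncc).
have allT' : forall x y : 'I_n.+1, x <= y -> (x, y) \in T'.
  by move=> x y xy; rewrite H inE.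
case: (boolP (conn T ord0 (oneI n))) => c01.
  exfalso; have := allT' (oneI n) ord_max (leq_ord _).
  rewrite inT' => /orP [/andP[_ c1m]|/andP[/eqP e _]].
    by move: nc; rewrite (conn_trans c01 c1m).
  by have := one_val n0; rewrite e.
have h0 : forall y, conn T ord0 y -> y = ord0.
  move=> y cy; apply: ord_inj => /=; case: (posnP y) => // y0; exfalso.
  have := @conv _ T ord0 y (oneI n) tr (leq0n (oneI n)); rewrite one_val // => /(_ y0 cy).
  by rewrite (negbTE c01).
split => //.
have ec : c = oneI n.
  apply: ord_inj; rewrite one_val //; have := cmin _ c01; rewrite one_val // => c1.
  case: (posnP c) => c0'; last lia.
  have e : c = ord0 by apply: ord_inj.
  by move: ncc; rewrite e conn0.
have := allT' ord0 ord_max (leq0n _).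
rewrite inT' (negbTE nc) andbF /= -ec => /orP [|//].
by rewrite ec one_val //; lia.
Qed.


Lemma mem_comp n (T : {set 'I_n.+1 * 'I_n.+1}) (x y : 'I_n.+1) : (y \in component T x) = conn T x y.
Proof. by rewrite inE. Qed.

Lemma comp_eq n (T : {set 'I_n.+1 * 'I_n.+1}) (x y : 'I_n.+1) : conn T x y -> component T x = component T y.
Proof.
move=> H; apply/setP => z; rewrite !mem_comp; apply/idP/idP => h.
  by apply: conn_trans h; rewrite conn_sym.
exact: conn_trans H h.
Qed.

Lemma P_iff_comp n (T : {set 'I_n.+1 * 'I_n.+1}) : 0 < n -> is_transfer T ->
  (Pc T <-> (num_components T = 1 \/
     (num_components T = 2 /\ component T (trivial_sub n) = [set trivial_sub n]))).
Proof.
move=> n0 tr; rewrite /num_components /trivial_sub.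
have one0 : oneI n != ord0 by apply/eqP => e; have := one_val n0; rewrite e.
have max0 : (ord_max : 'I_n.+1) != ord0 by apply/eqP => e; have := congr1 val e => /=; lia.
split.
  case=> [c0n|[h0 c1m]].
    left; have allc : forall x, component T x = component T ord0.
      move=> x; apply/esym/comp_eq; exact: (@conv _ T ord0 ord_max x tr (leq0n x) (leq_ord x) c0n).
    have -> : [set component T x | x : 'I_n.+1] = [set component T ord0].
      apply/setP => S; rewrite inE; apply/imsetP/eqP => [[x _ ->]|->]; first exact: allc.
      by exists ord0.
    by rewrite cards1.
  right.
  have c0 : component T ord0 = [set ord0].
    by apply/setP => y; rewrite mem_comp inE; apply/idP/eqP => [/h0 //|->]; apply: conn0.
  split => //.
  have -> : [set component T x | x : 'I_n.+1] = [set component T ord0; component T (oneI n)].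
    apply/setP => S; rewrite !inE; apply/imsetP/orP => [[x _ ->]|[/eqP ->|/eqP ->]].
    - case: (posnP x) => x0; first by left; have -> : x = ord0 by apply: ord_inj.
      right; apply/eqP/esym/comp_eq.
      by apply: (@conv _ T (oneI n) ord_max x tr _ (leq_ord x) c1m); rewrite one_val.
    - by exists ord0.
    - by exists (oneI n).
  rewrite cards2 (_ : (component T ord0 != component T (oneI n)) = true) //; apply/eqP => e.
  have : oneI n \in component T (oneI n) by rewrite mem_comp conn0.
  by rewrite -e c0 inE (negbTE one0).
case=> [/eqP/cards1P [S0 ES]|[/eqP N2 c0]].
  left.
  have h1 : component T ord0 = S0.
    by apply/set1P; rewrite -ES; apply/imsetP; exists ord0.
  have h2 : component T ord_max = S0.
    by apply/set1P; rewrite -ES; apply/imsetP; exists ord_max.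
  by rewrite -mem_comp h1 -h2 mem_comp conn0.
right.
have h0 : forall y, conn T ord0 y -> y = ord0.
  by move=> y; rewrite -mem_comp c0 inE => /eqP.
split => //.
case: (boolP (conn T (oneI n) ord_max)) => // n1m; exfalso.
set S := component T ord0 |: (component T (oneI n) |: [set component T ord_max]).
have sub : S \subset [set component T x | x : 'I_n.+1].
  apply/subsetP => X; rewrite !inE => /or3P [] /eqP ->; apply/imsetP.
  - by exists ord0.
  - by exists (oneI n).
  - by exists ord_max.
have d01 : component T ord0 != component T (oneI n).
  apply/eqP => e; have : oneI n \in component T (oneI n) by rewrite mem_comp conn0.
  by rewrite -e c0 inE (negbTE one0).
have d0m : component T ord0 != component T ord_max.
  apply/eqP => e; have : ord_max \in component T ord_max by rewrite mem_comp conn0.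
  by rewrite -e c0 inE (negbTE max0).
have d1m : component T (oneI n) != component T ord_max.
  apply/eqP => e; have : ord_max \in component T ord_max by rewrite mem_comp conn0.
  by rewrite -e mem_comp (negbTE n1m).
have : #|S| = 3.
  rewrite !cardsU1 cards1 !inE (negbTE d01) (negbTE d0m) (negbTE d1m).
  by [].
have := subset_leq_card sub; rewrite (eqP N2) => le3 e3.
by move: le3; rewrite e3.
Qed.


Definition maxs n (T : {set 'I_n.+1 * 'I_n.+1}) (i : 'I_n.+1) : nat :=
  \max_(j : 'I_n.+1 | (i, j) \in T) (nat_of_ord j).
Definition enc n (T : {set 'I_n.+1 * 'I_n.+1}) : seq nat := mkseq (fun k => maxs T (inord k)) n.+1.
Definition dec n (s : seq nat) : {set 'I_n.+1 * 'I_n.+1} :=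
  [set p : 'I_n.+1 * 'I_n.+1 | (p.1 <= p.2) && (p.2 <= nth 0 s p.1)].

Lemma maxs_le n (T : {set 'I_n.+1 * 'I_n.+1}) i : maxs T i <= n.
Proof. by apply/bigmax_leqP => j _; rewrite -ltnS. Qed.

Lemma maxsP n (T : {set 'I_n.+1 * 'I_n.+1}) (i j : 'I_n.+1) : is_transfer T ->
  ((i, j) \in T) = (i <= j) && (j <= maxs T i).
Proof.
move=> /xtrP[t1 t2 t3 t4]; apply/idP/idP.
  by move=> H; rewrite (t1 _ _ H) /=; apply: (leq_bigmax_cond j H).
case/andP => ij jm.
have [j0 Hj0 E] := @eq_bigmax_cond _ (fun j => (i, j) \in T) (fun j : 'I_n.+1 => nat_of_ord j)
  (ltac:(by apply/card_gt0P; exists i; apply: t2)).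
rewrite /maxs E in jm.
by apply: t4 Hj0 ij jm.
Qed.

Lemma nth_enc n (T : {set 'I_n.+1 * 'I_n.+1}) k : k < n.+1 -> nth 0 (enc T) k = maxs T (inord k).
Proof. by move=> H; rewrite /enc nth_mkseq. Qed.

Lemma enc_valid n (T : {set 'I_n.+1 * 'I_n.+1}) : is_transfer T -> valid n.+1 (enc T).
Proof.
move=> tr; have [t1 t2 t3 t4] := iffLR (xtrP T) tr.
split; first by rewrite size_mkseq.
  move=> i Hi; rewrite nth_enc //; have := maxs_le T (inord i).
  have := maxsP (inord i) (inord i) tr; rewrite t2 inordK // leqnn /= => /esym ->.
  by rewrite ltnS.
move=> i j Hi ij; rewrite (nth_enc T Hi) => jm.
have Hj : j < n.+1 by have := maxs_le T (inord i); lia.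
rewrite nth_enc //.
have e : (inord i, inord j) \in T by rewrite (maxsP _ _ tr) !inordK // ij jm.
apply/bigmax_leqP => k Hk.
by have := t3 _ _ _ e Hk; rewrite (maxsP _ _ tr) => /andP[].
Qed.

Lemma dec_transfer n (s : seq nat) : valid n.+1 s -> is_transfer (dec n s).
Proof.
case=> Ss Hr Hn; apply/xtrP; split => [K H|K|K H L|K H L]; rewrite ?inE /=.
- by case/andP.
- by rewrite leqnn; have := Hr K (ltn_ord K); case/andP.
- case/andP => KH HK /andP[HL LH]; rewrite (leq_trans KH HL) /=.
  by apply: leq_trans LH _; apply: Hn.
- by case/andP => KH HK KL LH; rewrite KL /=; apply: leq_trans LH HK.
Qed.

Lemma enc_dec n (s : seq nat) : valid n.+1 s -> enc (dec n s) = s.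
Proof.
move=> V; case: (V) => Ss Hr Hn.
apply: (@eq_from_nth _ 0); first by rewrite size_mkseq Ss.
move=> k; rewrite size_mkseq => Hk; rewrite nth_enc //.
apply/eqP; rewrite eqn_leq; apply/andP; split.
  by apply/bigmax_leqP => j; rewrite inE /= inordK // => /andP[].
have Hs := Hr k Hk.
have := @leq_bigmax_cond _ (fun j => (inord k, j) \in dec n s) (fun j : 'I_n.+1 => nat_of_ord j)
  (inord (nth 0 s k)).
rewrite inE /= !inordK //; last by case/andP: Hs.
by apply; rewrite leqnn andbT; case/andP: Hs.
Qed.

Lemma dec_enc n (T : {set 'I_n.+1 * 'I_n.+1}) : is_transfer T -> dec n (enc T) = T.
Proof.
move=> tr; apply/setP => -[x y]; rewrite inE /= nth_enc // inord_val.
by rewrite maxsP.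
Qed.

Lemma card_enc n (Q : pred (seq nat)) :
  #|[set T : {set 'I_n.+1 * 'I_n.+1} | is_transfer T && Q (enc T)]| = count Q (gen n.+1).
Proof.
rewrite cardE -size_filter.
set E := enum _.
have U : uniq (map (@enc n) E).
  rewrite map_inj_in_uniq ?enum_uniq //.
  move=> T1 T2; rewrite !mem_enum !inE => /andP[tr1 _] /andP[tr2 _] e.
  by rewrite -(dec_enc tr1) -(dec_enc tr2) e.
have P : perm_eq (map (@enc n) E) [seq s <- gen n.+1 | Q s].
  apply: uniq_perm => //; first by rewrite filter_uniq // gen_uniq.
  move=> t; apply/mapP/idP.
    case=> T; rewrite mem_enum inE => /andP[tr qT] ->.
    by rewrite mem_filter qT; apply/gen_valid; apply: enc_valid.
  rewrite mem_filter => /andP[qt /gen_valid V].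
  exists (dec n t); last by rewrite enc_dec.
  by rewrite mem_enum inE dec_transfer //= enc_dec.
by rewrite -(perm_size P) size_map.
Qed.


Definition Qb n (t : seq nat) := (nth 0 t 0 == n) || ((nth 0 t 0 == 0) && (nth 0 t 1 == n)).

Lemma P_iff_Q n (T : {set 'I_n.+1 * 'I_n.+1}) : 0 < n -> is_transfer T -> (Pc T <-> Qb n (enc T)).
Proof.
move=> n0 tr; have [t1 t2 t3 t4] := iffLR (xtrP T) tr.
have e0 : nth 0 (enc T) 0 = maxs T ord0.
  by rewrite nth_enc //; congr maxs; apply: ord_inj; rewrite inordK.
have e1 : nth 0 (enc T) 1 = maxs T (oneI n) by rewrite nth_enc.
have m0 : (maxs T ord0 == n) = ((ord0, ord_max) \in T).
  by rewrite maxsP //= eqn_leq maxs_le.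
have m1 : (maxs T (oneI n) == n) = ((oneI n, ord_max) \in T).
  by rewrite maxsP //= eqn_leq maxs_le leq_ord.
rewrite /Qb e0 e1 m0 m1.
have zz : (maxs T ord0 == 0) <-> (forall y, conn T ord0 y -> y = ord0).
  split.
    move=> /eqP z y cy; have := @fromMin _ T ord0 y tr (fun v _ => leq0n v) cy.
    by rewrite maxsP // z leqn0 => /andP[_ /eqP e]; apply: ord_inj.
  move=> h; have Hm : maxs T ord0 < n.+1 by rewrite ltnS maxs_le.
  have : (ord0, inord (maxs T ord0)) \in T by rewrite maxsP //= inordK.
  move/edge_conn/h => e; apply/eqP; have := congr1 (@nat_of_ord _) e.
  by rewrite inordK.
split.
  case=> [c|[h0 c1]].
    by rewrite (@fromMin _ T ord0 ord_max tr (fun v _ => leq0n v) c).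
  apply/orP; right; apply/andP; split; first by apply/zz.
  by apply: fromMin => //; apply: one_min.
case/orP => [e|/andP[z e]]; first by left; apply: edge_conn.
by right; split; [apply/zz | apply: edge_conn].
Qed.

Lemma sumn_ones (T : eqType) (f : T -> nat) (l : seq T) : (forall x, x \in l -> f x = 1) -> sumn (map f l) = size l.
Proof.
elim: l => //= x l IH H; rewrite H ?mem_head // IH // => y yl.
by apply: H; rewrite inE yl orbT.
Qed.

Lemma N_allowed N s : valid N s -> N \in allowed s.
Proof.
case=> Ss Hr Hn; case: N Ss Hr Hn => [|N] Ss Hr Hn; first by rewrite inE.
rewrite /allowed inE /=; apply/mapP; exists N => //.
rewrite mem_filter mem_iota Ss leqnn andbT /=.
rewrite andbT; apply/beP => y Hy; have := Hr y; lia.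
Qed.

Lemma head_allowed N s : valid N s ->
  count (fun t => nth 0 t 0 == N) [seq v :: map succn s | v <- allowed s] = 1.
Proof.
move=> V; rewrite count_map.
have -> : count (preim (fun v => v :: map succn s) (fun t => nth 0 t 0 == N)) (allowed s)
   = count_mem N (allowed s).
  by apply: eq_count => v.
by rewrite count_uniq_mem ?allowed_uniq // N_allowed.
Qed.

Lemma head_count N : count (fun t => nth 0 t 0 == N) (gen N.+1) = size (gen N).
Proof.
rewrite genS count_flatten -map_comp; apply: sumn_ones => s /gen_valid V.
exact: head_allowed.
Qed.

Lemma second_count m :
  count (fun t => (nth 0 t 0 == 0) && (nth 0 t 1 == m.+1)) (gen m.+2) = size (gen m).
Proof.
rewrite -head_count genS count_flatten -map_comp -[RHS]sumn_count; congr sumn.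
apply/eq_in_map => s /gen_valid [Ss _ _].
rewrite /= /allowed /= (nth_map 0) ?Ss // eqSS.
rewrite !count_map; set c := count _ _.
have -> : c = 0 by apply/eqP; rewrite -leqn0 leqNgt -has_count; apply/hasP => -[].
by rewrite addn0.
Qed.

Lemma count_Q m : count (Qb m.+1) (gen m.+2) = size (gen m.+1) + size (gen m).
Proof.
rewrite -head_count -second_count.
apply: count_split => t; first by [].
by rewrite /=; case: eqP => // ->.
Qed.

Lemma Cat_fact a : Cat a * ((a.+1)`! * a`!) = (a.*2)`!.
Proof. by rewrite -size_gen_Cat size_gen_fact. Qed.

Lemma Cat_rec m : Cat m.+1 * m.+2 = 2 * (m.*2).+1 * Cat m.
Proof.
have h0 := Cat_fact m; have h1 := Cat_fact m.+1.
rewrite doubleS !factS -h0 in h1.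
have pos : 0 < m.+1 * (m.+1 * (m`! * m`!)) by rewrite !muln_gt0 fact_gt0.
apply/eqP; rewrite -(eqn_pmul2r pos); apply/eqP.
have E1 : Cat m.+1 * m.+2 * (m.+1 * (m.+1 * (m`! * m`!))) =
  Cat m.+1 * (m.+2 * (m.+1 * m`!) * (m.+1 * m`!)) by ring.
rewrite E1 h1 factS -!muln2; ring.
Qed.

Lemma Cat_pos m : 0 < Cat m.
Proof.
have := Cat_fact m; case: (Cat m) => //= e.
by have := fact_gt0 (m.*2); rewrite -e.
Qed.

Lemma Cat_formula m : Cat m.+1 + Cat m = ((5 * m.+1 - 1) * ((m.+1).-1.*2)`!) %/ ((m.+1).-1`! * (m.+2)`!).
Proof.
have -> : (5 * m.+1 - 1) * ((m.+1).-1.*2)`! = (Cat m.+1 + Cat m) * ((m.+1).-1`! * (m.+2)`!).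
  rewrite /= -Cat_fact.
  have r := Cat_rec m.
  rewrite !factS.
  have -> : 5 * m.+1 - 1 = 5 * m + 4 by lia.
  have E : (Cat m.+1 + Cat m) * (m`! * (m.+2 * (m.+1 * m`!))) =
    (Cat m.+1 * m.+2 + Cat m * m.+2) * (m.+1 * m`! * m`!) by ring.
  rewrite E r -!muln2; ring.
by rewrite mulnK // muln_gt0 !fact_gt0.
Qed.


Lemma ratio_nat m :
  (Cat m.+1 + Cat m) * (16 * m.+1 ^ 2 - 4) = (5 * m.+1 ^ 2 + 9 * m.+1 - 2) * Cat m.+2.
Proof.
have r1 := Cat_rec m; have r2 := Cat_rec m.+1.
have -> : 5 * m.+1 ^ 2 + 9 * m.+1 - 2 = (5 * m + 4) * (m + 3) by nia.
have -> : 16 * m.+1 ^ 2 - 4 = 4 * (2 * m + 1) * (2 * m + 3) by nia.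
rewrite -!muln2 in r1 r2.
nia.
Qed.

Import GRing.Theory Num.Theory.
Unset Implicit Arguments.

Theorem mainTheorem17 (p n : nat) : prime p -> 0 < n ->
  (forall T : {set 'I_n.+1 * 'I_n.+1}, is_transfer T ->
     (lesser_simply_paired T <->
        (num_components T = 1 \/
         (num_components T = 2 /\ component T (trivial_sub n) = [set trivial_sub n]))))
  /\ #|[set T : {set 'I_n.+1 * 'I_n.+1} | is_transfer T && lesser_simply_paired T]|
       = Cat n + Cat n.-1
  /\ Cat n + Cat n.-1 = ((5 * n - 1) * (n.-1.*2)`!) %/ ((n.-1)`! * (n.+1)`!)
  /\ ((#|[set T : {set 'I_n.+1 * 'I_n.+1} | is_transfer T && lesser_simply_paired T]|%:R
        / #|[set T : {set 'I_n.+1 * 'I_n.+1} | is_transfer T]|%:R)%R : rat)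
       = ((5 * n ^ 2 + 9 * n - 2)%N%:R / (16 * n ^ 2 - 4)%N%:R)%R.
Proof.
move=> _ n0.
have charLSP : forall T : {set 'I_n.+1 * 'I_n.+1}, is_transfer T ->
   (lesser_simply_paired T <-> (num_components T = 1 \/
         (num_components T = 2 /\ component T (trivial_sub n) = [set trivial_sub n]))).
  move=> T tr; rewrite -(P_iff_comp n0 tr); split; [exact: P_of_lsp | exact: lsp_of_P].
have setE : [set T : {set 'I_n.+1 * 'I_n.+1} | is_transfer T && lesser_simply_paired T] =
            [set T : {set 'I_n.+1 * 'I_n.+1} | is_transfer T && Qb n (enc T)].
  apply/setP => T; rewrite !inE; case: (boolP (is_transfer T)) => //= tr.
  apply/idP/idP => H.
    exact: (iffLR (P_iff_Q n0 tr) (P_of_lsp n0 tr H)).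
  exact: (lsp_of_P n0 tr (iffRL (P_iff_Q n0 tr) H)).
have cntL : #|[set T : {set 'I_n.+1 * 'I_n.+1} | is_transfer T && lesser_simply_paired T]|
    = Cat n + Cat n.-1.
  rewrite setE card_enc; case: n n0 {charLSP setE} => // m _.
  by rewrite count_Q !size_gen_Cat.
have cntT : #|[set T : {set 'I_n.+1 * 'I_n.+1} | is_transfer T]| = Cat n.+1.
  have -> : [set T : {set 'I_n.+1 * 'I_n.+1} | is_transfer T] =
            [set T : {set 'I_n.+1 * 'I_n.+1} | is_transfer T && predT (enc T)].
    by apply/setP => T; rewrite !inE andbT.
  by rewrite card_enc count_predT size_gen_Cat.
split; first exact: charLSP.
split; first exact: cntL.
split; first by case: n n0 {charLSP setE cntL cntT} => // m _; exact: Cat_formula.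
rewrite cntL cntT; case: n n0 {charLSP setE cntL cntT} => // m _ /=.
apply/eqP; rewrite GRing.eqr_div.
- by rewrite -!natrM eqr_nat ratio_nat.
- by rewrite pnatr_eq0 -lt0n Cat_pos.
- by rewrite pnatr_eq0 -lt0n; nia.
Qed.
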